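(* Let $f_1:X_1\to Y_1$ and $f_2:X_2\to Y_2$ be safe maps in $\mathsf{Nom}$. Then $(u_1,u_2)\in X_1\times X_2$ is $(f_1\times f_2)$-safe if and only if $u_i$ is $f_i$-safe for $i=1,2$, $\mathsf{bv}_{f_1}(u_1)\#u_2$, and $\mathsf{bv}_{f_2}(u_2)\#u_1$.
   Context: Nominal sets over a countably infinite set $\mathcal V$ of names; $\mathsf{supp}(u)$ the least finite support; for a finite set $S$ of names, $S\#u$ means $S\cap\mathsf{supp}(u)=\emptyset$; products carry the coordinatewise action. For an equivariant $f:X\to Y$: $u\in X$ is $f$-safe if $|\mathsf{supp}(u)|=\max\{|\mathsf{supp}(v)|:v\in f^{-1}(f(u))\}$ (the maximum existing); $\mathsf{bv}_f(u)=\mathsf{supp}(u)\setminus\mathsf{supp}(f(u))$; $f$ is safe if every element of $Y$ has an $f$-safe preimage. *)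

(* Defs.v *)
From mathcomp Require Import all_boot.
From Stdlib Require Import ClassicalEpsilon.

Set Implicit Arguments.
Unset Strict Implicit.
Unset Printing Implicit Defensive.

(* Names: the countably infinite set V is nat. *)

Record fperm := FPerm {
  fp : nat -> nat;
  fpinv : nat -> nat;
  fpK : cancel fp fpinv;
  fpinvK : cancel fpinv fp;
  fp_fin : exists n, forall a, n <= a -> fp a = a }.

Definition supports_by (T : Type) (act : fperm -> T -> T) (S : seq nat) (x : T) :=
  forall p : fperm, (forall a, a \in S -> fp p a = a) -> act p x = x.

Record nomset := NomSet {
  ncar :> Type;
  nact : fperm -> ncar -> ncar;
  nact_id : forall p x, (forall a, fp p a = a) -> nact p x = x;
  nact_comp : forall p q r x, (forall a, fp r a = fp p (fp q a)) ->
                nact r x = nact p (nact q x);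
  nfin : forall x, exists S : seq nat, supports_by nact S x }.

Definition supports (X : nomset) (S : seq nat) (x : X) := supports_by (@nact X) S x.

Definition in_supp (X : nomset) (x : X) (a : nat) : Prop :=
  forall S, supports S x -> a \in S.

Definition supp (X : nomset) (x : X) : seq nat :=
  epsilon (inhabits [::]) (fun s => uniq s /\ forall a, a \in s <-> in_supp x a).

Definition fresh (X : nomset) (S : seq nat) (u : X) : Prop :=
  forall a, a \in S -> a \notin supp u.

Definition equivariant (X Y : nomset) (f : X -> Y) : Prop :=
  forall p x, f (@nact X p x) = @nact Y p (f x).

Definition fsafe (X Y : nomset) (f : X -> Y) (u : X) : Prop :=
  forall v : X, f v = f u -> size (supp v) <= size (supp u).

Definition bv (X Y : nomset) (f : X -> Y) (u : X) : seq nat :=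
  [seq a <- supp u | a \notin supp (f u)].

Definition safe (X Y : nomset) (f : X -> Y) : Prop :=
  forall y : Y, exists x : X, f x = y /\ fsafe f x.

Definition prod_act (X1 X2 : nomset) (p : fperm) (u : X1 * X2) : X1 * X2 :=
  (@nact X1 p u.1, @nact X2 p u.2).

Lemma prod_act_id (X1 X2 : nomset) p (x : X1 * X2) :
  (forall a, fp p a = a) -> prod_act p x = x.
Proof. by case: x => x1 x2 H; rewrite /prod_act /= !nact_id. Qed.

Lemma prod_act_comp (X1 X2 : nomset) p q r (x : X1 * X2) :
  (forall a, fp r a = fp p (fp q a)) -> prod_act r x = prod_act p (prod_act q x).
Proof. by case: x => x1 x2 H; rewrite /prod_act /= (nact_comp _ H) (nact_comp _ H). Qed.

Lemma prod_fin (X1 X2 : nomset) (x : X1 * X2) :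
  exists S : seq nat, supports_by (@prod_act X1 X2) S x.
Proof.
case: x => x1 x2.
have [S1 H1] := nfin x1; have [S2 H2] := nfin x2.
exists (S1 ++ S2) => p Hp; rewrite /prod_act /= H1 ?H2 // => a Ha;
  apply: Hp; rewrite mem_cat Ha ?orbT //.
Qed.

Definition prod_nom (X1 X2 : nomset) : nomset :=
  @NomSet (X1 * X2) (@prod_act X1 X2) (@prod_act_id X1 X2)
          (@prod_act_comp X1 X2) (@prod_fin X1 X2).

Definition prod_map (X1 X2 Y1 Y2 : nomset) (f1 : X1 -> Y1) (f2 : X2 -> Y2)
  : prod_nom X1 X2 -> prod_nom Y1 Y2 := fun u => (f1 u.1, f2 u.2).

(* Main.v *)
Require Import Defs.
From mathcomp Require Import all_boot.
From Stdlib Require Import ClassicalEpsilon Classical.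
From mathcomp Require Import zify.

Set Implicit Arguments.
Unset Strict Implicit.
Unset Printing Implicit Defensive.

Definition fresh_for (L : seq nat) : nat := (foldr maxn 0 L).+1.

Lemma fresh_for_gt L a : a \in L -> a < fresh_for L.
Proof.
rewrite /fresh_for ltnS; elim: L => //= b L IH; rewrite inE => /orP [/eqP ->|/IH h].
  exact: leq_maxl.
exact: leq_trans h (leq_maxr _ _).
Qed.

Lemma fresh_forP L : fresh_for L \notin L.
Proof. by apply/negP => /fresh_for_gt; rewrite ltnn. Qed.

Definition tsw (a b c : nat) := if c == a then b else if c == b then a else c.

Lemma tswK a b : cancel (tsw a b) (tsw a b).
Proof.
move=> c; rewrite /tsw; do !case: eqP => //=; congruence.
Qed.

Lemma tsw_fin a b : exists n, forall c, n <= c -> tsw a b c = c.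
Proof.
exists (maxn a b).+1 => c hc; rewrite /tsw.
have ha : c != a by apply/eqP => E; move: hc; rewrite E ltnNge leq_maxl.
have hb : c != b by apply/eqP => E; move: hc; rewrite E ltnNge leq_maxr.
by rewrite (negbTE ha) (negbTE hb).
Qed.

Definition tp (a b : nat) : fperm := FPerm (tswK a b) (tswK a b) (tsw_fin a b).

Lemma finv_fin (p : fperm) : exists n, forall a, n <= a -> fpinv p a = a.
Proof.
have [n Hn] := fp_fin p; exists n => a Ha.
by rewrite -{1}(Hn a Ha) fpK.
Qed.

Definition finv (p : fperm) : fperm :=
  FPerm (fpinvK p) (fpK p) (finv_fin p).

Section Comp.
Variables p q : fperm.
Lemma fcompK : cancel (fun a => fp p (fp q a)) (fun a => fpinv q (fpinv p a)).
Proof. by move=> a; rewrite !fpK. Qed.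
Lemma fcompinvK : cancel (fun a => fpinv q (fpinv p a)) (fun a => fp p (fp q a)).
Proof. by move=> a; rewrite !fpinvK. Qed.
Lemma fcomp_fin : exists n, forall a, n <= a -> fp p (fp q a) = a.
Proof.
have [n Hn] := fp_fin p; have [m Hm] := fp_fin q.
exists (maxn n m) => a Ha.
rewrite Hm ?Hn //; [exact: leq_trans (leq_maxl _ _) Ha | exact: leq_trans (leq_maxr _ _) Ha].
Qed.
End Comp.

Definition fcomp (p q : fperm) : fperm :=
  FPerm (fcompK p q) (fcompinvK p q) (fcomp_fin p q).

Lemma id_fin : exists n, forall a : nat, n <= a -> id a = a.
Proof. by exists 0. Qed.

Definition fid : fperm := @FPerm id id (fun _ => erefl) (fun _ => erefl) id_fin.

Section Nom.
Variable X : nomset.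
Implicit Types (x : X) (S T : seq nat).

Lemma supports_sub S S' x : supports S x -> {subset S <= S'} -> supports S' x.
Proof. by move=> H sub p Hp; apply: H => a Ha; apply: Hp; apply: sub. Qed.

Lemma supports_conj S x (r : fperm) :
  supports S x -> supports (map (fp r) S) (nact r x).
Proof.
move=> H p Hp.
set q := fcomp (finv r) (fcomp p r).
have Hq : nact q x = x.
  apply: H => a Ha; rewrite /q /= Hp ?fpK //; exact: map_f.
rewrite -(nact_comp (r := fcomp p r)) //.
rewrite (nact_comp (p := r) (q := q)) ?Hq // => a /=.
by rewrite fpinvK.
Qed.

Lemma supports_step S T x a :
  supports S x -> supports T x -> a \notin T -> supports [seq c <- S | c != a] x.
Proof.
move=> HS HT aT p Hp.
have [n Hn] := fp_fin p.
set b := fresh_for (n :: a :: S ++ T).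
have bF := fresh_forP (n :: a :: S ++ T).
rewrite -/b !inE !mem_cat !negb_or in bF.
case/and4P: bF => bn ba bS bT.
have nb : n <= b by apply: ltnW; apply: fresh_for_gt; rewrite inE eqxx.
have Hx : nact (tp a b) x = x.
  apply: HT => c Hc /=; rewrite /tsw.
  have -> : (c == a) = false by apply/negbTE; apply: contraNneq aT => <-.
  by have -> : (c == b) = false by apply/negbTE; apply: contraNneq bT => <-.
have HS' := supports_conj (r := tp a b) HS; rewrite Hx in HS'.
apply: HS' => c /mapP [s Hs ->] /=; rewrite /tsw.
have [sa|sa] := eqVneq s a; first by rewrite Hn.
have -> : (s == b) = false by apply/negbTE; apply: contraNneq bS => <-.
by apply: Hp; rewrite mem_filter sa.
Qed.

Definition inS x a : bool :=
  if excluded_middle_informative (in_supp x a) then true else false.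

Lemma inSP x a : reflect (in_supp x a) (inS x a).
Proof. by rewrite /inS; case: excluded_middle_informative => h; constructor. Qed.

Lemma supports_filter x : forall L K, supports (L ++ K) x ->
  supports ([seq a <- L | inS x a] ++ K) x.
Proof.
elim=> [|a L IH] K H //=.
case: (inSP x a) => ha.
  have H1 : supports (L ++ a :: K) x.
    refine (supports_sub H _) => c; rewrite /= !(mem_cat, inE).
    by case/orP => [->|/orP [->|->]]; rewrite ?orbT.
  refine (supports_sub (IH _ H1) _) => c; rewrite /= !(mem_cat, inE).
  by case/orP => [->|/orP [->|->]]; rewrite ?orbT.
have [T HT] : exists T, supports T x /\ a \notin T.
  apply: NNPP => N; apply: ha => T HT; apply: NNPP => aT.
  by apply: N; exists T; split => //; apply/negP.
case: HT => HT aT.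
have H2 := supports_step H HT aT.
apply: IH; refine (supports_sub H2 _) => c; rewrite mem_filter /= inE.
by case/andP => /negbTE ->.
Qed.

Lemma supp_spec x : uniq (supp x) /\ forall a, a \in supp x <-> in_supp x a.
Proof.
rewrite /supp; apply: (@epsilon_spec (seq nat) (inhabits [::]) (fun s => uniq s /\ forall a, a \in s <-> in_supp x a)).
have [S HS] := nfin x.
exists (undup [seq a <- S | inS x a]); split; first exact: undup_uniq.
move=> a; rewrite mem_undup mem_filter; split; first by case/andP => /inSP.
by move=> h; apply/andP; split; [apply/inSP | apply: h].
Qed.

Lemma supp_uniq x : uniq (supp x).
Proof. by case: (supp_spec x). Qed.

Lemma supp_min S x : supports S x -> {subset supp x <= S}.
Proof. by move=> H a /(proj2 (supp_spec x) a) h; apply: h. Qed.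

Lemma supp_supports x : supports (supp x) x.
Proof.
have [S HS] := nfin x.
have := @supports_filter x S [::]; rewrite !cats0 => /(_ HS) H.
refine (supports_sub H _) => a; rewrite mem_filter => /andP [/inSP h _].
by apply/(proj2 (supp_spec x) a).
Qed.

Lemma supp_conj x (r : fperm) : {subset supp (nact r x) <= map (fp r) (supp x)}.
Proof. apply: supp_min; apply: supports_conj; exact: supp_supports. Qed.

Lemma size_conj x (r : fperm) : size (supp x) <= size (supp (nact r x)).
Proof.
have E : nact (finv r) (nact r x) = x.
  rewrite -(nact_comp (r := fid)) ?nact_id // => a /=; by rewrite fpK.
rewrite -[X in _ <= X](size_map (fp (finv r))).
apply: uniq_leq_size; first exact: supp_uniq.
by move=> a; rewrite -{1}E; apply: supp_conj.
Qed.

End Nom.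

Lemma supp_f (X Y : nomset) (f : X -> Y) (x : X) :
  equivariant f -> {subset supp (f x) <= supp x}.
Proof.
move=> ef; apply: supp_min => p Hp.
by rewrite -ef (supp_supports Hp).
Qed.

Lemma supp_pair (X1 X2 : nomset) (x1 : X1) (x2 : X2) a :
  (a \in @supp (prod_nom X1 X2) (x1, x2)) = (a \in supp x1) || (a \in supp x2).
Proof.
apply/idP/idP.
  move/(@supp_min (prod_nom X1 X2) (supp x1 ++ supp x2)); rewrite mem_cat; apply.
  move=> p Hp; rewrite /= /prod_act /=.
  rewrite !supp_supports // => c Hc; apply: Hp; rewrite mem_cat Hc ?orbT //.
have key : forall (x : prod_nom X1 X2), in_supp x a -> a \in supp x.
  by move=> x h; apply/(proj2 (supp_spec x) a).
case/orP => h; apply: key => S HS.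
  apply: (@supp_min X1 S x1) h => p Hp.
  by have := HS p Hp; rewrite /= /prod_act /= => -[].
apply: (@supp_min X2 S x2) h => p Hp.
by have := HS p Hp; rewrite /= /prod_act /= => -[].
Qed.

Definition Ilist (X1 X2 : nomset) (x1 : X1) (x2 : X2) :=
  [seq a <- supp x2 | a \in supp x1].

Lemma size_pair (X1 X2 : nomset) (x1 : X1) (x2 : X2) :
  size (@supp (prod_nom X1 X2) (x1, x2)) + size (Ilist x1 x2) =
  size (supp x1) + size (supp x2).
Proof.
have P : perm_eq (@supp (prod_nom X1 X2) (x1, x2))
                 (supp x1 ++ [seq a <- supp x2 | a \notin supp x1]).
  apply: uniq_perm; first exact: supp_uniq.
    rewrite cat_uniq supp_uniq filter_uniq ?supp_uniq // andbT.
    by apply/hasPn => a; rewrite mem_filter => /andP [].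
  move=> a; rewrite supp_pair mem_cat mem_filter.
  by case: (a \in supp x1).
rewrite (perm_size P) size_cat /Ilist !size_filter -addnA.
by rewrite [count (predC _) _ + _]addnC count_predC.
Qed.

Lemma freshen (X : nomset) (K A : seq nat) : forall (L : seq nat) (x : X),
  (forall c : nat, c \in supp x -> c \notin K -> c \in A -> c \in L) ->
  exists r : fperm, (forall a, a \in K -> fp r a = a) /\
    forall c, c \in supp (nact r x) -> (c \in K) || (c \notin A).
Proof.
elim=> [|a L IH] x H.
  exists fid; split => // c; rewrite nact_id // => Hc.
  case cK: (c \in K) => //=; apply/negP => cA.
  by have := H c Hc; rewrite cK cA => /(_ isT isT).
case aK: (a \in K).
  apply: IH => c Hc cK cA; have := H c Hc cK cA; rewrite inE.
  by case/orP => // /eqP E; move: cK; rewrite E aK.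
set b := fresh_for (a :: K ++ A ++ supp x ++ L).
have bF := fresh_forP (a :: K ++ A ++ supp x ++ L).
rewrite -/b !inE !mem_cat !negb_or in bF.
case/and5P: bF => ba bK bA bx bL.
have [r [Kr Hr]] : exists r : fperm, (forall a, a \in K -> fp r a = a) /\
    forall c : nat, c \in supp (nact r (nact (tp a b) x)) -> (c \in K) || (c \notin A).
  apply: IH => c /supp_conj /mapP [s Hs ->] /=; rewrite /tsw.
  have [sa|sa] := eqVneq s a; first by rewrite (negbTE bA).
  have [sb|sb] := eqVneq s b; first by move: Hs; rewrite sb (negbTE bx).
  move=> sK sA; have := H s Hs sK sA; rewrite inE (negbTE sa) //.
exists (fcomp r (tp a b)); split.
  move=> c cK /=; rewrite /tsw.
  have -> : (c == a) = false by apply/negbTE; apply: contraFneq aK => <-.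
  have -> : (c == b) = false by apply/negbTE; apply: contraNneq bK => <-.
  exact: Kr.
by move=> c; rewrite (nact_comp (p := r) (q := tp a b)) //; apply: Hr.
Qed.

Theorem lemma5p28 (X1 Y1 X2 Y2 : nomset) (f1 : X1 -> Y1) (f2 : X2 -> Y2)
  (eq1 : equivariant f1) (eq2 : equivariant f2)
  (s1 : safe f1) (s2 : safe f2) (u1 : X1) (u2 : X2) :
  @fsafe (prod_nom X1 X2) (prod_nom Y1 Y2) (prod_map f1 f2) (u1, u2) <->
  [/\ fsafe f1 u1, fsafe f2 u2, fresh (bv f1 u1) u2 & fresh (bv f2 u2) u1].
Proof.
split.
  move=> H.
  have [w1 [ew1 sw1]] := s1 (f1 u1).
  have [w2 [ew2 sw2]] := s2 (f2 u2).
  have [r1 [Kr1 Hr1]] := @freshen X1 (supp (f1 u1)) (supp (f2 u2)) (supp w1) w1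
    (fun c h _ _ => h).
  set w1' := nact r1 w1.
  have ew1' : f1 w1' = f1 u1 by rewrite /w1' eq1 ew1 supp_supports.
  have [r2 [Kr2 Hr2]] := @freshen X2 (supp (f2 u2)) (supp w1') (supp w2) w2
    (fun c h _ _ => h).
  set w2' := nact r2 w2.
  have ew2' : f2 w2' = f2 u2 by rewrite /w2' eq2 ew2 supp_supports.
  have sz1 : size (supp w1) <= size (supp w1') := @size_conj _ w1 r1.
  have sz2 : size (supp w2) <= size (supp w2') := @size_conj _ w2 r2.
  have su1 : size (supp u1) <= size (supp w1) by apply: sw1; rewrite ew1.
  have su2 : size (supp u2) <= size (supp w2) by apply: sw2; rewrite ew2.
  have Hp : size (@supp (prod_nom X1 X2) (w1', w2')) <=
            size (@supp (prod_nom X1 X2) (u1, u2)).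
    by apply: H; rewrite /prod_map /= ew1' ew2'.
  have inC : forall a, a \in Ilist w1' w2' ->
      (a \in supp (f1 u1)) && (a \in supp (f2 u2)).
    move=> a; rewrite mem_filter => /andP [a1 a2].
    have := Hr2 a a2; rewrite a1 orbF => h2.
    have := Hr1 a a1; rewrite h2 orbF => h1.
    by rewrite h1.
  have sub1 : {subset Ilist w1' w2' <= Ilist u1 u2}.
    move=> a /inC /andP [h1 h2]; rewrite mem_filter.
    by rewrite (supp_f eq1 h1) (supp_f eq2 h2).
  have I : size (Ilist w1' w2') <= size (Ilist u1 u2).
    by apply: uniq_leq_size => //; rewrite filter_uniq ?supp_uniq.
  have Pw := size_pair w1' w2'.
  have Pu := size_pair u1 u2.
  have lI : size (Ilist u1 u2) <= size (Ilist w1' w2') by lia.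
  have [_ eqm] := uniq_min_size (filter_uniq _ (supp_uniq _)) sub1 lI.
  have e1 : size (supp w1) <= size (supp u1) by lia.
  have e2 : size (supp w2) <= size (supp u2) by lia.
  split.
  - move=> v e; apply: leq_trans e1; apply: sw1; by rewrite e ew1.
  - move=> v e; apply: leq_trans e2; apply: sw2; by rewrite e ew2.
  - move=> a; rewrite mem_filter => /andP [na a1]; apply/negP => a2.
    have : a \in Ilist u1 u2 by rewrite mem_filter a1 a2.
    by rewrite -eqm => /inC /andP [h _]; rewrite h in na.
  - move=> a; rewrite mem_filter => /andP [na a2]; apply/negP => a1.
    have : a \in Ilist u1 u2 by rewrite mem_filter a1 a2.
    by rewrite -eqm => /inC /andP [_ h]; rewrite h in na.
case=> h1 h2 fr1 fr2 [v1 v2]; rewrite /prod_map /= => -[e1 e2].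
have S1 := h1 _ e1; have S2 := h2 _ e2.
have P1 := size_pair v1 v2; have P2 := size_pair u1 u2.
have I : size (Ilist u1 u2) <= size (Ilist v1 v2).
  apply: uniq_leq_size; first by rewrite filter_uniq ?supp_uniq.
  move=> a; rewrite !mem_filter => /andP [a1 a2].
  have y1 : a \in supp (f1 u1).
    apply: contraT => na; have := fr1 a; rewrite mem_filter na a1 => /(_ isT).
    by rewrite a2.
  have y2 : a \in supp (f2 u2).
    apply: contraT => na; have := fr2 a; rewrite mem_filter na a2 => /(_ isT).
    by rewrite a1.
  rewrite -e1 in y1; rewrite -e2 in y2.
  by rewrite (supp_f eq1 y1) (supp_f eq2 y2).
lia.
Qed.
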